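(* Let $\zeta_n=e^{2\pi i/n}$, $F_n={\mathbf Q}(\zeta_n+\zeta_n^{-1})$ and $\underline{\mathcal O}_n={\mathbf Z}[\zeta_n+\zeta_n^{-1}]$; let $\mathfrak p_n$ be the unique prime of $\underline{\mathcal O}_n$ above $2$. (a) If $n=2^s\ge 8$, put $p_n=2+\zeta_n+\zeta_n^{-1}$. Then $\operatorname{N}_{F_n/{\mathbf Q}}(p_n)=2$ and $p_n$ is a totally positive generator of $\mathfrak p_n$. (b) If $n=3\cdot 2^s\ge 12$, put $p_n'=1+\zeta_n+\zeta_n^{-1}$. Then $\operatorname{N}_{F_n/{\mathbf Q}}(p_n')=\operatorname{N}_{F_n/{\mathbf Q}}(p_n'-2)=-2$ and $\mathfrak p_n=(p_n')$. All units of $\underline{\mathcal O}_n$ have norm $1$, and there is no element of $\underline{\mathcal O}_n$ of norm $2$. *)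

(* Defs.v *)
From mathcomp Require Import all_boot all_order all_algebra.
From mathcomp Require Import algC.
Set Implicit Arguments. Unset Strict Implicit. Unset Printing Implicit Defensive.
Import Order.TTheory GRing.Theory Num.Theory.
Local Open Scope ring_scope.

(* zeta_n = e^{2 pi i/n} for even n: (n/2).-root (-1) is the (n/2)-th root of
   -1 of minimal argument, i.e. e^{i pi/(n/2)} = e^{2 pi i/n}.  All n in the
   statement are even. *)
Definition zeta (n : nat) : algC := (n./2).-root (-1).

Definition cc (n k : nat) : algC := zeta n ^+ k + (zeta n ^+ k)^-1.

Definition evk (n k : nat) (q : {poly int}) : algC := (map_poly intr q).[cc n k].

Definition inO (n : nat) (x : algC) : Prop := exists q : {poly int}, x = evk n 1 q.

(* The embeddings of F_n = Q(zeta_n + zeta_n^{-1}) into C are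
   zeta_n + zeta_n^{-1} |-> zeta_n^k + zeta_n^{-k}, k in (Z/n)^* / {+-1};
   we index them by 0 <= k < n/2 with gcd(k,n) = 1. *)
Definition emb_idx (n : nat) (k : 'I_n) : bool := coprime k n && (2 * k < n)%N.
Arguments emb_idx : clear implicits.

Definition normO (n : nat) (q : {poly int}) : algC :=
  \prod_(k < n | emb_idx n k) evk n k q.

Definition totally_positive (n : nat) (q : {poly int}) : Prop :=
  forall k : 'I_n, emb_idx n k -> 0 < evk n k q.

Definition idealO (n : nat) (P : algC -> Prop) : Prop :=
  [/\ (forall x, P x -> inO n x),
      P 0,
      (forall x y, P x -> P y -> P (x - y)) &
      (forall a x, inO n a -> P x -> P (a * x))].

Definition prime_idealO (n : nat) (P : algC -> Prop) : Prop :=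
  [/\ idealO n P,
      ~ P 1 &
      (forall x y, inO n x -> inO n y -> P (x * y) -> P x \/ P y)].

Definition principalO (n : nat) (p : algC) : algC -> Prop :=
  fun x => exists2 y, inO n y & x = p * y.

Definition generates_prime_above_2 (n : nat) (p : algC) : Prop :=
  [/\ prime_idealO n (principalO n p),
      principalO n p 2 &
      forall P, prime_idealO n P -> P 2 -> forall x, P x <-> principalO n p x].

Definition unitO (n : nat) (q : {poly int}) : Prop :=
  exists q' : {poly int}, evk n 1 q * evk n 1 q' = 1.

(* Main.v *)
Require Import Defs.
From mathcomp Require Import all_boot all_order all_algebra.
From mathcomp Require Import algC algnum cyclotomic zify ring lra.
Set Implicit Arguments. Unset Strict Implicit. Unset Printing Implicit Defensive.
Import Order.TTheory GRing.Theory Num.Theory.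
Local Open Scope ring_scope.

Definition cz (z : algC) (k : nat) := z ^+ k + (z ^+ k)^-1.
Definition Pz (z : algC) (n : nat) (F : algC -> algC) :=
  \prod_(k < n | emb_idx n k) F (cz z k).

Lemma Pz_half z m F : Pz z m.*2 F = \prod_(0 <= k < m | coprime k m.*2) F (cz z k).
Proof.
rewrite /Pz /emb_idx.
rewrite -(big_mkord (fun k => coprime k m.*2 && (2 * k < m.*2)%N) (fun k => F (cz z k))).
rewrite (@big_cat_nat _ _ _ m 0 m.*2) /=; [|lia|lia].
rewrite [X in _ * X]big_nat_cond [X in _ * X]big1 ?mulr1; last first.
  move=> i /andP[/andP[mi _] /andP[_]]; rewrite mul2n ltn_double ltnNge mi //.
rewrite big_nat_cond [RHS]big_nat_cond; apply: eq_bigl => i.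
by case: (ltnP i m) => //= hi; rewrite ?andbF // mul2n ltn_double hi !andbT.
Qed.
Lemma prod_fold (g : nat -> algC) t :
  \prod_(0 <= k < t.*2.+1) g k = g t * \prod_(0 <= k < t) (g k * g (t.*2 - k)%N).
Proof.
rewrite (@big_cat_nat _ _ _ t) /=; [|lia|rewrite -addnn; lia].
rewrite [\prod_(t <= i < _) _]big_ltn; [|lia].
rewrite big_split /= mulrCA; congr (_ * (_ * _)).
have -> : t.*2.+1 = (t + (t.+1))%N by rewrite -addnn; lia.
have -> : t.+1 = (0 + t.+1)%N by [].
rewrite big_addn.
rewrite big_nat_rev /=.
have -> : (t + (0 + t.+1) - t.+1 = t)%N by lia.
rewrite big_nat_cond [RHS]big_nat_cond; apply: eq_bigr => i /andP[/andP[_ hi] _]; congr g; lia.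
Qed.

Lemma coprime_compl j k : coprime j (j + k) = coprime k (j + k).
Proof. by rewrite /coprime gcdnDl [(j+k)%N]addnC gcdnDl gcdnC. Qed.

Lemma coprime_dbl k m : coprime k m.*2.*2 = coprime k m.*2.
Proof.
rewrite -!mul2n coprimeMr; apply/andP/idP => [[] //|h]; split => //.
by apply: coprime_dvdr h; rewrite dvdn_mulr.
Qed.

Lemma one_neqN1 : (1 : algC) != -1.
Proof. by rewrite -subr_eq0 opprK -(natrD _ 1 1) pnatr_eq0. Qed.
Lemma z_neq0 (z : algC) m : z ^+ m = -1 -> z != 0.
Proof.
move=> h; apply/negP => /eqP z0; move: h; rewrite z0.
case: m => [|m]; rewrite ?expr0 ?expr0n /=. 
  by move=> /eqP; rewrite (negbTE one_neqN1).
by move=> /eqP; rewrite eq_sym oppr_eq0 oner_eq0.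
Qed.

Lemma cz_refl z m k : z ^+ m = -1 -> (k <= m)%N -> cz z (m - k) = - cz z k.
Proof.
move=> hm km; have z0 := z_neq0 hm.
have bk : z ^+ k != 0 by rewrite expf_neq0.
have e : z ^+ (m - k) = - (z ^+ k)^-1.
  apply: (mulIf bk); rewrite -exprD subnK // hm mulNr mulVf //.
rewrite /cz e invrN invrK; ring.
Qed.

Lemma cz_sq z k : z != 0 -> cz z k ^+ 2 - 2 = cz (z ^+ 2) k.
Proof.
move=> z0; have bk : z ^+ k != 0 by rewrite expf_neq0.
by rewrite /cz -exprM mulnC exprM; field.
Qed.

Lemma Pz_pair z t F G : (1 < t)%N -> z ^+ t.*2 = -1 ->
  (forall x, F x * F (-x) = G (x ^+ 2 - 2)) ->
  Pz z t.*2.*2 F = Pz (z ^+ 2) t.*2 G.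
Proof.
move=> t1 hz hFG; have z0 := z_neq0 hz.
rewrite !Pz_half big_mkcond [RHS]big_mkcond /=.
have H2 : (if coprime t.*2 t.*2.*2 then F (cz z t.*2) else 1) = 1.
  by rewrite coprime_dbl /coprime gcdnn; case: ifP => // /eqP; lia.
transitivity (\prod_(0 <= k < t.*2.+1) (if coprime k t.*2.*2 then F (cz z k) else 1)).
  by rewrite big_nat_recr //= H2 mulr1.
rewrite prod_fold.
have -> : (if coprime t t.*2.*2 then F (cz z t) else 1) = 1.
  rewrite coprime_dbl /coprime -addnn gcdnDl gcdnn; case: ifP => // /eqP; lia.
rewrite mul1r; apply: eq_big_nat => k /andP[_ ktt].
have kt : (k <= t.*2)%N by lia.
rewrite cz_refl //.
have -> : coprime (t.*2 - k) t.*2.*2 = coprime k t.*2.*2.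
  by rewrite !coprime_dbl; have := coprime_compl (t.*2 - k) k; rewrite subnK.
rewrite coprime_dbl; case: ifP => _; rewrite ?mulr1 // hFG cz_sq //.
Qed.

Lemma Pz4 z F : z ^+ 2 = -1 -> Pz z 4 F = F 0.
Proof.
move=> hz; have z0 := z_neq0 hz.
rewrite /Pz big_mkcond !big_ord_recr big_ord0 /= /emb_idx /=.
rewrite !mul1r !mulr1; congr F; rewrite /cz expr1.
apply: (mulfI z0); rewrite mulrDr mulfV // mulr0 -expr2 hz; ring.
Qed.

Lemma Pz6 z F : z ^+ 3 = -1 -> z != -1 -> Pz z 6 F = F 1.
Proof.
move=> hz zn1; have z0 := z_neq0 hz.
rewrite /Pz big_mkcond !big_ord_recr big_ord0 /= /emb_idx /=.
rewrite !mul1r !mulr1; congr F; rewrite /cz expr1.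
have h : (z + 1) * (z ^+ 2 - z + 1) = 0 by rewrite -[0](subrr (-1)) -{1}hz; ring.
have z1 : z + 1 != 0 by rewrite addr_eq0.
move: h => /eqP; rewrite mulf_eq0 (negbTE z1) /= => /eqP h.
apply: (mulfI z0); rewrite mulrDr mulfV // mulr1 -expr2.
by apply/eqP; rewrite -subr_eq0 -h; apply/eqP; ring.
Qed.

Lemma Pz_2pow s z : z ^+ (2 ^ s.+1) = -1 -> Pz z (2 ^ s.+2) (fun x => 2 - x) = 2.
Proof.
elim: s z => [|s IH] z hz.
  by rewrite Pz4 // subr0.
have -> : (2 ^ s.+3 = (2 ^ s.+1).*2.*2)%N by rewrite -!mul2n !expnS.
rewrite (@Pz_pair _ _ _ (fun x => 2 - x)).
- have -> : ((2 ^ s.+1).*2 = 2 ^ s.+2)%N by rewrite -mul2n -expnS.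
  apply: IH; by rewrite -exprM -expnS.
- by rewrite -(expn0 2) ltn_exp2l.
- by rewrite -mul2n -expnS.
- by move=> x; ring.
Qed.

Lemma Pz_3pow s z : z ^+ (3 * 2 ^ s)%N = -1 -> z ^+ (2 ^ s) != -1 ->
  Pz z (3 * 2 ^ s.+1)%N (fun x => -1 - x) = -2.
Proof.
elim: s z => [|s IH] z hz hz2.
  by rewrite Pz6 // -opprD.
have -> : (3 * 2 ^ s.+2 = (3 * 2 ^ s).*2.*2)%N by rewrite -!mul2n !expnS; lia.
rewrite (@Pz_pair _ _ _ (fun x => -1 - x)).
- have -> : ((3 * 2 ^ s).*2 = 3 * 2 ^ s.+1)%N by rewrite -mul2n expnS; lia.
  apply: IH; rewrite -exprM; first by rewrite mulnCA -expnS.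
  by rewrite -expnS.
- have := expn_gt0 2 s; lia.
- by rewrite -mul2n mulnCA -expnS.
- by move=> x; ring.
Qed.
Definition ev (q : {poly int}) (x : algC) := (map_poly intr q).[x].

Lemma evD p q x : ev (p + q) x = ev p x + ev q x.
Proof. by rewrite /ev rmorphD hornerD. Qed.
Lemma evB p q x : ev (p - q) x = ev p x - ev q x.
Proof. by rewrite /ev rmorphB hornerD hornerN. Qed.
Lemma evN p x : ev (- p) x = - ev p x.
Proof. by rewrite /ev rmorphN hornerN. Qed.
Lemma evM p q x : ev (p * q) x = ev p x * ev q x.
Proof. by rewrite /ev rmorphM hornerM. Qed.
Lemma evXn p n x : ev (p ^+ n) x = ev p x ^+ n.
Proof. by rewrite /ev rmorphXn /= horner_exp. Qed.
Lemma evX x : ev 'X x = x.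
Proof. by rewrite /ev map_polyX hornerX. Qed.
Lemma evC (c : int) x : ev c%:P x = c%:~R.
Proof. by rewrite /ev map_polyC hornerC. Qed.
Lemma ev1 x : ev 1 x = 1.
Proof. by rewrite /ev rmorph1 hornerC. Qed.
Lemma ev_comp p q x : ev (p \Po q) x = ev p (ev q x).
Proof. by rewrite /ev map_comp_poly horner_comp. Qed.
Lemma ev_int (q : {poly int}) (a : int) : ev q a%:~R = (q.[a])%:~R.
Proof. by rewrite /ev horner_map. Qed.

Definition evE := (evD, evB, evN, evM, evXn, evX, evC, ev1, ev_comp).

Definition Tp (q : {poly int}) : {poly int} :=
  ((even_poly q) ^+ 2 - 'X * (odd_poly q) ^+ 2) \Po ('X + 2%:P).

Lemma ev_eo q x : ev q x = ev (even_poly q) (x ^+ 2) + ev (odd_poly q) (x ^+ 2) * x.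
Proof.
by rewrite -{1}(poly_even_odd q) !evE.
Qed.

Lemma Tp_eval q x : ev q x * ev q (- x) = ev (Tp q) (x ^+ 2 - 2).
Proof.
rewrite /Tp !evE (ev_eo q x) (ev_eo q (-x)) sqrrN.
have -> : x ^+ 2 - 2 + 2%:~R = x ^+ 2 by rewrite addrNK.
ring.
Qed.

Lemma norm3 s : forall z q, z ^+ (3 * 2 ^ s.+1)%N = -1 -> z ^+ (2 ^ s.+1) != -1 ->
  exists a b : int, Pz z (3 * 2 ^ s.+2)%N (ev q) = (a ^+ 2 - 3 * b ^+ 2)%:~R.
Proof.
elim: s => [|s IH] z q hz hz2.
  have -> : (3 * 2 ^ 2 = 3.*2.*2)%N by [].
  rewrite (@Pz_pair _ _ _ (ev (Tp q))) //; last by move=> x; exact: Tp_eval.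
  rewrite Pz6; first last.
  - by rewrite expn1 in hz2.
  - by rewrite -exprM.
  exists (even_poly q).[3], (odd_poly q).[3].
  rewrite /Tp !evE.
  have -> : 1 + (2:int)%:~R = (3:int)%:~R :> algC by [].
  rewrite !ev_int.
  by rewrite rmorphB /= !intrM !expr2.
have -> : (3 * 2 ^ s.+3 = (3 * 2 ^ s.+1).*2.*2)%N by rewrite -!mul2n !expnS; lia.
rewrite (@Pz_pair _ _ _ (ev (Tp q))); first last.
- by move=> x; exact: Tp_eval.
- by rewrite -mul2n mulnCA -expnS.
- have := expn_gt0 2 s; lia.
have -> : ((3 * 2 ^ s.+1).*2 = 3 * 2 ^ s.+2)%N by rewrite -mul2n !expnS; lia.
apply: IH; rewrite -exprM; first by rewrite mulnCA -expnS.
by rewrite -expnS.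
Qed.

Lemma unit_norm (v : algC) n : (0 < n)%N -> v ^+ n = 1 -> v * v^* = 1.
Proof.
move=> n0 hv; have : `|v| ^+ n = 1 by rewrite -normrX hv normr1.
move/eqP; rewrite pexpr_eq1 // => /eqP nv.
by rewrite -normCK nv expr1n.
Qed.

Lemma conj_sub1 (u : algC) : (u - 1)^* = u^* - 1.
Proof. by rewrite rmorphB rmorph1. Qed.

Lemma final_step (w u : algC) N M : (0 < N)%N -> N = (3 * M)%N ->
  w = N.-root (-1) -> w ^+ M = -1 -> w != 1 ->
  u ^+ 3 = w -> u * u^* = 1 -> 1 <= u + u^* -> False.
Proof.
move=> N0 NM ew wM w1 u3 uu ha.
set a := u + u^* in ha.
have aR : a \is Num.real by rewrite CrealE /a rmorphD /= conjCK addrC.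
have e2 : (u - 1) * (u^* - 1) = 2 - a.
  rewrite /a mulrBr !mulrBl uu mulr1 mul1r. ring.
have a2 : a <= 2.
  have := mul_conjC_ge0 (u - 1); rewrite conj_sub1 e2.
  by rewrite subr_ge0.
have an2 : a != 2.
  apply/negP => /eqP a2e.
  have : (u - 1) * (u - 1)^* == 0.
    by rewrite conj_sub1 e2 a2e subrr.
  rewrite mul_conjC_eq0 subr_eq0 => /eqP u1.
  by move: w1; rewrite -u3 u1 expr1n eqxx.
have a0 : 0 < a by apply: lt_le_trans ha; exact: ltr01.
set r := w + w^*.
have er : r = a ^+ 3 - 3 * a.
  rewrite /r /a -u3 rmorphXn /=.
  have -> : (u + u^*) ^+ 3 = u ^+ 3 + u^* ^+ 3 + 3 * (u * u^*) * (u + u^*) by ring.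
  rewrite uu; ring.
have ra : r < a.
  rewrite -subr_gt0.
  have -> : a - r = a * (2 - a) * (2 + a) by rewrite er; ring.
  have h1 : 0 < 2 - a by rewrite subr_gt0 lt_neqAle an2 a2.
  have h2 : 0 < 2 + a by rewrite addr_gt0.
  by rewrite !mulr_gt0.
have uN : u ^+ N = -1 by rewrite NM exprM u3.
have ReU : 'Re u = a / 2%:R by rewrite ReE.
have ReW : 'Re w = r / 2%:R by rewrite ReE.
have key : forall v, v ^+ N = -1 -> 0 <= 'Im v -> 'Re v = a / 2%:R -> False.
  move=> v vN vI vR.
  have := rootC_Re_max N0 vN vI; rewrite -ew vR ReW.
  rewrite ler_pM2r ?invr_gt0 ?ltr0n // => /(lt_le_trans ra); by rewrite ltxx.
have ImR : 'Im u \is Num.real by apply: Creal_Im.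
case: (real_ge0P ImR) => hI.
  exact: (key u uN hI ReU).
apply: (key u^*).
- by rewrite -rmorphXn /= uN rmorphN1.
- by rewrite Im_conj oppr_ge0 ltW.
- by rewrite Re_conj.
Qed.

Lemma le0_sum3 (t0 t1 t2 : algC) : t0 <= 0 -> t1 <= 0 -> t2 <= 0 -> t0 + t1 + t2 = 0 -> t0 = 0.
Proof.
move=> h0 h1 h2 s; apply/eqP; rewrite eq_le h0 /=.
have -> : t0 = - (t1 + t2) by apply/eqP; rewrite -subr_eq0 opprK addrA s.
by rewrite oppr_ge0 -[0]addr0 lerD.
Qed.

Lemma three_real (a0 a1 a2 : algC) : a0 \is Num.real -> a1 \is Num.real -> a2 \is Num.real ->
  0 <= a0 + 2 -> 0 <= a1 + 2 -> 0 <= a2 + 2 -> a0 + a1 + a2 = 0 ->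
  a0 ^+ 2 + a1 ^+ 2 + a2 ^+ 2 = 6 -> [\/ 1 <= a0, 1 <= a1 | 1 <= a2].
Proof.
move=> R0 R1 R2 g0 g1 g2 s1 s2.
case: (boolP (1 <= a0)) => [h|n0]; first by constructor 1.
case: (boolP (1 <= a1)) => [h|n1]; first by constructor 2.
case: (boolP (1 <= a2)) => [h|n2]; first by constructor 3.
exfalso.
have l0 : a0 < 1 by rewrite real_ltNge ?real1.
have l1 : a1 < 1 by rewrite real_ltNge ?real1.
have l2 : a2 < 1 by rewrite real_ltNge ?real1.
have t0 : (a0 - 1) * (a0 + 2) <= 0 by rewrite mulr_le0_ge0 // subr_le0 ltW.
have t1 : (a1 - 1) * (a1 + 2) <= 0 by rewrite mulr_le0_ge0 // subr_le0 ltW.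
have t2 : (a2 - 1) * (a2 + 2) <= 0 by rewrite mulr_le0_ge0 // subr_le0 ltW.
have S : (a0 - 1) * (a0 + 2) + (a1 - 1) * (a1 + 2) + (a2 - 1) * (a2 + 2) = 0.
  have -> : (a0 - 1) * (a0 + 2) + (a1 - 1) * (a1 + 2) + (a2 - 1) * (a2 + 2)
     = (a0 ^+ 2 + a1 ^+ 2 + a2 ^+ 2) + (a0 + a1 + a2) - 6 by ring.
  by rewrite s1 s2 addr0 subrr.
have e0 := le0_sum3 t0 t1 t2 S.
have e1 : (a1 - 1) * (a1 + 2) = 0.
  by apply: (le0_sum3 t1 t2 t0); rewrite -S; ring.
have e2 : (a2 - 1) * (a2 + 2) = 0.
  by apply: (le0_sum3 t2 t0 t1); rewrite -S; ring.
have fix1 : forall a : algC, a < 1 -> (a - 1) * (a + 2) = 0 -> a = -2.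
  move=> a la /eqP; rewrite mulf_eq0 subr_eq0 (lt_eqF la) /= addr_eq0 => /eqP //.
move: s1; rewrite (fix1 _ l0 e0) (fix1 _ l1 e1) (fix1 _ l2 e2) => /eqP.
by rewrite -!opprD oppr_eq0 -!natrD pnatr_eq0.
Qed.

Lemma conjD (x y : algC) : (x + y)^* = x^* + y^*.
Proof. by rewrite rmorphD. Qed.
Lemma conjM (x y : algC) : (x * y)^* = x^* * y^*.
Proof. by rewrite rmorphM. Qed.

Lemma cube_root_lemma M : (0 < M)%N -> ((3 * M)%N.-root (-1 : algC)) ^+ M != -1.
Proof.
move=> M0; set N := (3 * M)%N; set w := (N.-root (-1) : algC).
apply/negP => /eqP wM.
have N0 : (0 < N)%N by rewrite /N; lia.
have wN : w ^+ N = -1 by rewrite /w rootCK.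
have w1 : w != 1.
  apply/negP => /eqP w1; move: wM; rewrite w1 expr1n => /eqP.
  by rewrite (negbTE one_neqN1).
have [om pom] := @C_prim_root_exists 3 isT.
have om3 : om ^+ 3 = 1 by apply: prim_expr_order.
have om1 : om != 1 by have := prim_order_dvd pom 1; rewrite expr1 => <-.
have omsum : 1 + om + om ^+ 2 = 0.
  have : (om - 1) * (1 + om + om ^+ 2) = 0 by rewrite -[0](subrr 1) -{3}om3; ring.
  by move/eqP; rewrite mulf_eq0 subr_eq0 (negbTE om1) /= => /eqP.
set y := 3.-root w.
have y3 : y ^+ 3 = w by rewrite /y rootCK.
have cube : forall j, (y * om ^+ j) ^+ 3 = w.
  by move=> j; rewrite exprMn y3 -exprM mulnC exprM om3 expr1n mulr1.
have unorm : forall j, (y * om ^+ j) * (y * om ^+ j)^* = 1.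
  move=> j; apply: (@unit_norm _ (3 * N.*2)); first by rewrite -mul2n; lia.
  by rewrite exprM cube -mul2n mulnC exprM wN sqrrN expr1n.
have geN2 : forall u : algC, u * u^* = 1 -> 0 <= (u + u^*) + 2.
  move=> u uu; have := mul_conjC_ge0 (u + 1).
  have -> : (u + 1) * (u + 1)^* = u + u^* + 2.
    by rewrite conjD rmorph1 mulrDr !mulrDl uu mul1r mulr1; ring.
  by [].
have realu : forall u : algC, u + u^* \is Num.real.
  by move=> u; rewrite CrealE conjD conjCK addrC.
set u0 := y * om ^+ 0; set u1 := y * om ^+ 1; set u2 := y * om ^+ 2.
have s1 : (u0 + u0^*) + (u1 + u1^*) + (u2 + u2^*) = 0.
  have e : u0 + u1 + u2 = 0.
    by rewrite /u0 /u1 /u2 expr0 expr1 -!mulrDr omsum mulr0.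
  have -> : (u0 + u0^*) + (u1 + u1^*) + (u2 + u2^*) = (u0 + u1 + u2) + (u0 + u1 + u2)^*.
    by rewrite !conjD; ring.
  by rewrite e rmorph0 addr0.
have sq : forall u : algC, u * u^* = 1 -> (u + u^*) ^+ 2 = u ^+ 2 + u^* ^+ 2 + 2.
  move=> u uu; have -> : (u + u^*) ^+ 2 = u ^+ 2 + u^* ^+ 2 + 2 * (u * u^*) by ring.
  by rewrite uu mulr1.
have s2 : (u0 + u0^*) ^+ 2 + (u1 + u1^*) ^+ 2 + (u2 + u2^*) ^+ 2 = 6.
  rewrite !sq ?unorm //.
  have e : u0 ^+ 2 + u1 ^+ 2 + u2 ^+ 2 = 0.
    rewrite /u0 /u1 /u2 expr0 mulr1 expr1.
    have -> : (y * om ^+ 2) ^+ 2 = y ^+ 2 * om.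
      rewrite exprMn -exprM; have -> : (2 * 2 = 3 + 1)%N by [].
      by rewrite exprD om3 mul1r expr1.
    transitivity (y ^+ 2 * (1 + om + om ^+ 2)); first by ring.
    by rewrite omsum mulr0.
  have -> : u0 ^+ 2 + u0^* ^+ 2 + 2 + (u1 ^+ 2 + u1^* ^+ 2 + 2) + (u2 ^+ 2 + u2^* ^+ 2 + 2)
     = (u0 ^+ 2 + u1 ^+ 2 + u2 ^+ 2) + (u0 ^+ 2 + u1 ^+ 2 + u2 ^+ 2)^* + 6.
    by rewrite !conjD !rmorphXn; ring.
  by rewrite e rmorph0 !add0r.
have fs := fun u (h1 : u ^+ 3 = w) (h2 : u * u^* = 1) h3 =>
  @final_step w u N M N0 erefl erefl wM w1 h1 h2 h3.
case: (three_real (realu u0) (realu u1) (realu u2) (geN2 _ (unorm 0%N))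
  (geN2 _ (unorm 1%N)) (geN2 _ (unorm 2%N)) s1 s2) => h.
- exact: (fs u0 (cube 0%N) (unorm 0%N) h).
- exact: (fs u1 (cube 1%N) (unorm 1%N) h).
- exact: (fs u2 (cube 2%N) (unorm 2%N) h).
Qed.

Section Gen.
Variable n : nat.
Let c := cc n 1.
Let O := inO n.

Lemma O_ev q : O (ev q c). Proof. by exists q. Qed.
Lemma O_add x y : O x -> O y -> O (x + y).
Proof. by move=> [p ->] [q ->]; exists (p + q); rewrite /evk rmorphD hornerD. Qed.
Lemma O_sub x y : O x -> O y -> O (x - y).
Proof. by move=> [p ->] [q ->]; exists (p - q); rewrite /evk rmorphB hornerD hornerN. Qed.
Lemma O_mul x y : O x -> O y -> O (x * y).
Proof. by move=> [p ->] [q ->]; exists (p * q); rewrite /evk rmorphM hornerM. Qed.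
Lemma O_int (k : int) : O k%:~R.
Proof. by exists k%:P; rewrite /evk map_polyC hornerC. Qed.
Lemma O_c : O c.
Proof. by exists 'X; rewrite /evk map_polyX hornerX. Qed.
Lemma O_1 : O 1. Proof. by have := O_int 1. Qed.
Lemma O_0 : O 0. Proof. by have := O_int 0. Qed.
Lemma O_X x k : O x -> O (x ^+ k).
Proof. move=> Ox; elim: k => [|k IH]; first by rewrite expr0; exact: O_1. by rewrite exprS; apply: O_mul. Qed.

Lemma O_Aint x : c \in Aint -> O x -> x \in Aint.
Proof.
move=> cA [q ->]; rewrite /evk; apply: rpred_horner => //.
by apply/polyOverP => i; rewrite coef_map Aint_int.
Qed.

Variable a : int.
Let p := c + a%:~R.

Lemma O_p : O p. Proof. exact: O_add O_c (O_int a). Qed.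

Lemma decomp x : O x -> exists m : int, exists2 y, O y & x = m%:~R + p * y.
Proof.
move=> [q ->]; rewrite /evk -/(ev _ _).
elim/poly_ind: q => [|q k [m [y Oy ey]]].
  exists 0, 0; [exact: O_0 | by rewrite /ev rmorph0 horner0 mulr0 addr0].
rewrite evD evM evX evC ey.
exists (k - m * a), (m%:~R + y * p - y * a%:~R).
  by apply: O_sub; [apply: O_add; [apply: O_int | apply: O_mul => //; apply: O_p] |
     apply: O_mul => //; apply: O_int].
rewrite /p /c rmorphB rmorphM /=; ring.
Qed.

Lemma int_mod2 (m : int) : exists j : int, m = j * 2 + 0 \/ m = j * 2 + 1.
Proof.
exists (m %/ 2)%Z; have e := divz_eq m 2.
have h0 : (0 <= (m %% 2)%Z)%R by apply: modz_ge0.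
have h1 : ((m %% 2)%Z < 2)%R by apply: ltz_pmod.
have : (m %% 2)%Z = 0 \/ (m %% 2)%Z = 1 by lia.
by case => h; [left | right]; rewrite {1}e h.
Qed.


Hypothesis cA : c \in Aint.
Variable y0 : algC.
Hypothesis Oy0 : O y0.
Hypothesis hy0 : 2 = p * y0.
Variables (N : nat) (t : algC).
Hypothesis Ot : O t.
Hypothesis hN : p ^+ N = 2 * t.

Let Pp := principalO n p.

Lemma half_not_Aint : (2%:R : algC)^-1 \notin Aint.
Proof.
apply/negP => hA.
have : (2%:R : algC)^-1 \is a Num.int.
  by apply: Cint_rat_Aint => //; rewrite rpredV rpred_nat.
move/intrP => [m hm].
have : ((2 * m)%:~R : algC) = (1:int)%:~R.
  by rewrite intrM -hm -[(2:int)%:~R]/(2%:R : algC) mulfV // pnatr_eq0.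
by move/eqP; rewrite eqr_int => /eqP; lia.
Qed.

Lemma notP1 : ~ Pp 1.
Proof.
move=> [y Oy e].
have e2 : 1 = 2 * (t * y ^+ N) by rewrite mulrA -hN -exprMn -e expr1n.
have : (t * y ^+ N) \in Aint by apply: (O_Aint cA); apply: O_mul => //; apply: O_X.
have -> : t * y ^+ N = (2%:R : algC)^-1.
  apply: (@mulfI _ (2%:R)); first by rewrite pnatr_eq0.
  by rewrite -e2 mulfV // pnatr_eq0.
by move/negP: half_not_Aint.
Qed.

Lemma int_in (m : int) : (exists j, m = j * 2) -> Pp m%:~R.
Proof.
move=> [j ->]; exists (y0 * j%:~R); first by apply: O_mul => //; apply: O_int.
by rewrite mulrA -hy0 intrM mulrC.
Qed.

Lemma decomp2 x : O x -> exists b : bool, exists2 y, O y & x = b%:R + p * y.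
Proof.
move=> /decomp [m [y Oy ->]].
have [j [e|e]] := int_mod2 m.
- exists false, (y + y0 * j%:~R).
    by apply: O_add => //; apply: O_mul => //; apply: O_int.
  by rewrite e rmorphD rmorphM /= [p * (_ + _)]mulrDr [p * (y0 * _)]mulrA -hy0; ring.
- exists true, (y + y0 * j%:~R).
    by apply: O_add => //; apply: O_mul => //; apply: O_int.
  by rewrite e rmorphD rmorphM /= [p * (_ + _)]mulrDr [p * (y0 * _)]mulrA -hy0; ring.
Qed.

Lemma Pp_char x : O x -> Pp x -> exists2 y, O y & x = p * y.
Proof. by move=> _ [y Oy e]; exists y. Qed.

Lemma true_notin y : O y -> ~ Pp (1 + p * y).
Proof.
move=> Oy [z Oz e]; apply: notP1; exists (z - y); first exact: O_sub.
by rewrite mulrBr -e; ring.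
Qed.

Lemma ideal_Pp : idealO n Pp.
Proof.
split.
- by move=> x [y Oy ->]; apply: O_mul => //; apply: O_p.
- by exists 0; [exact: O_0 | rewrite mulr0].
- by move=> x y [x' Ox ->] [y' Oy ->]; exists (x' - y'); [apply: O_sub | rewrite mulrBr].
- by move=> b x Ob [x' Ox ->]; exists (b * x'); [apply: O_mul | rewrite mulrCA].
Qed.

Lemma prime_Pp : prime_idealO n Pp.
Proof.
split; [exact: ideal_Pp | exact: notP1 |].
move=> x y Ox Oy Pxy.
have [b1 [x1 Ox1 ex]] := decomp2 Ox.
have [b2 [y1 Oy1 ey]] := decomp2 Oy.
case: b1 ex => ex; last by left; exists x1; rewrite // ex add0r.
case: b2 ey => ey; last by right; exists y1; rewrite // ey add0r.
exfalso; apply: (@true_notin (x1 + y1 + p * x1 * y1)).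
  by apply: O_add; [apply: O_add | apply: O_mul; [apply: O_mul => //; apply: O_p|]].
suff <- : (x * y = 1 + p * (x1 + y1 + p * x1 * y1)) by [].
by rewrite ex ey /=; ring.
Qed.

Lemma gen_prime : generates_prime_above_2 n p.
Proof.
split; [exact: prime_Pp | by exists y0 |].
move=> P [[POx P0 PB PM] P1 Pprime] P2 x.
have Pp_in : P p.
  have : P (p ^+ N) by rewrite hN mulrC; apply: PM.
  elim: N => [|k IH]; first by rewrite expr0 => h; exfalso; apply: P1.
  rewrite exprS => /Pprime [||//|]; [exact: O_p | exact: O_X O_p | exact: IH].
split.
- move=> Px; have [b [y Oy e]] := decomp2 (POx _ Px).
  case: b e => e; last by exists y; rewrite // e add0r.
  exfalso; apply: P1.
  have -> : 1 = x - y * p by rewrite e /=; ring.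
  by apply: PB => //; apply: PM.
- by move=> [y Oy ->]; rewrite mulrC; apply: PM.
Qed.
End Gen.

Section Dick.
Variable n : nat.
Let z := zeta n.
Let O := inO n.
Hypothesis z0 : z != 0.

Lemma cc_rec k : cc n k.+2 = cc n 1 * cc n k.+1 - cc n k.
Proof.
rewrite /cc -/z; have bk : z ^+ k != 0 by rewrite expf_neq0.
rewrite !exprS; field.
by rewrite bk z0.
Qed.

Lemma O_cc k : O (cc n k).
Proof.
suff : O (cc n k) /\ O (cc n k.+1) by case.
elim: k => [|k [IH1 IH2]].
  split; last exact: O_c.
  by rewrite /cc expr0 invr1; have := O_int n 2.
split => //; rewrite cc_rec; apply: O_sub => //; apply: O_mul => //; exact: O_c.
Qed.

Definition R2 x y := exists2 t, O t & x - y = 2 * t.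

Lemma R2_refl x : R2 x x.
Proof. by exists 0; [exact: O_0 | rewrite subrr mulr0]. Qed.

Lemma R2_trans x y w : R2 x y -> R2 y w -> R2 x w.
Proof.
move=> [t Ot e1] [u Ou e2]; exists (t + u); first exact: O_add.
by rewrite mulrDr -e1 -e2; ring.
Qed.

Lemma R2_sq x y : O x -> O y -> R2 x y -> R2 (x ^+ 2) (y ^+ 2).
Proof.
move=> Ox Oy [t Ot e]; exists (t * (x + y)); first by apply: O_mul => //; apply: O_add.
by rewrite mulrA -e; ring.
Qed.

Lemma R2_2 x u : O u -> R2 (x + 2 * u) x.
Proof. by move=> Ou; exists u => //; ring. Qed.

Lemma cc_pow2 j : cc n (2 ^ j.+1) = cc n (2 ^ j) ^+ 2 - 2.
Proof.
rewrite /cc -/z expnS mulnC exprM; set v := z ^+ (2 ^ j).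
have v0 : v != 0 by rewrite expf_neq0.
field; by rewrite v0.
Qed.

Lemma R2_cpow j : R2 (cc n 1 ^+ (2 ^ j)) (cc n (2 ^ j)).
Proof.
elim: j => [|j IH]; first by rewrite expn0 expr1; exact: R2_refl.
apply: (@R2_trans _ (cc n (2 ^ j) ^+ 2)).
  rewrite expnS mulnC exprM; apply: R2_sq => //; [apply: O_X; exact: O_c | exact: O_cc].
rewrite cc_pow2.
by exists 1; [exact: O_1 | ring].
Qed.

Lemma R2_pow_add (a : int) j : R2 ((cc n 1 + a%:~R) ^+ (2 ^ j)) (cc n 1 ^+ (2 ^ j) + a%:~R ^+ (2 ^ j)).
Proof.
elim: j => [|j IH]; first by rewrite expn0 !expr1; exact: R2_refl.
have Oc := O_c n.
apply: (@R2_trans _ ((cc n 1 ^+ (2 ^ j) + a%:~R ^+ (2 ^ j)) ^+ 2)).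
  rewrite expnS mulnC exprM; apply: R2_sq => //.
  - by apply: O_X; apply: O_add => //; apply: O_int.
  - by apply: O_add; apply: O_X => //; apply: O_int.
rewrite !(expnS 2 j) !(mulnC 2) !(exprM _ _ 2).
set A := cc n 1 ^+ (2 ^ j); set B := (a%:~R : algC) ^+ (2 ^ j).
have -> : (A + B) ^+ 2 = A ^+ 2 + B ^+ 2 + 2 * (A * B) by ring.
apply: R2_2; apply: O_mul; apply: O_X => //; apply: O_int.
Qed.

End Dick.

Lemma zeta_half m : (0 < m)%N -> zeta m.*2 ^+ m = -1.
Proof. by move=> m0; rewrite /zeta doubleK rootCK. Qed.

Lemma zeta_n m : (0 < m)%N -> zeta m.*2 ^+ m.*2 = 1.
Proof. by move=> m0; rewrite -[in X in _ ^+ X]addnn exprD zeta_half // mulrNN mulr1. Qed.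

Lemma cc_Aint m : (0 < m)%N -> cc m.*2 1 \in Aint.
Proof.
move=> m0; have h := zeta_n m0; have m20 : (0 < m.*2)%N by rewrite double_gt0.
rewrite /cc expr1; apply: rpredD.
  by apply: (Aint_unity_root m20); rewrite unity_rootE h.
by apply: (Aint_unity_root m20); rewrite unity_rootE exprVn h invr1.
Qed.

Lemma normO_Pz n q : normO n q = Pz (zeta n) n (ev q).
Proof. by []. Qed.

Lemma ord1_emb n (h : (2 < n)%N) : emb_idx n (Ordinal (ltnW h)).
Proof. by rewrite /emb_idx /= coprime1n mul2n. Qed.

Lemma norm_split n q (h : (2 < n)%N) :
  normO n q = evk n 1 q * \prod_(k < n | emb_idx n k && (k != Ordinal (ltnW h))) evk n k q.
Proof. by rewrite /normO (bigD1 (Ordinal (ltnW h))) ?ord1_emb. Qed.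

Lemma O_rest n q (h : (2 < n)%N) : zeta n != 0 ->
  inO n (\prod_(k < n | emb_idx n k && (k != Ordinal (ltnW h))) evk n k q).
Proof.
move=> z0; apply: (big_ind (inO n)); [exact: O_1 | exact: O_mul |].
move=> k _; rewrite /evk -/(ev q (cc n k)).
have [r ->] := O_cc z0 k.
by exists (q \Po r); rewrite /evk -!/(ev _ _) ev_comp.
Qed.

Lemma R2_addr n x y w : R2 n x y -> R2 n (x + w) (y + w).
Proof. by move=> [t Ot e]; exists t => //; rewrite -e; ring. Qed.

Lemma part_a s : (3 <= s)%N ->
     let n := (2 ^ s)%N in
     let pn : {poly int} := 'X + 2%:P in
     [/\ normO n pn = 2,
         totally_positive n pn &
         generates_prime_above_2 n (evk n 1 pn)].
Proof.
move=> hs n pn.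
have [s' es] : exists s', s = s'.+3 by exists (s - 3)%N; lia.
have nE : n = (2 ^ s'.+2).*2 by rewrite /n es expnS mul2n.
have m0 : (0 < 2 ^ s'.+2)%N by rewrite expn_gt0.
have hz : zeta n ^+ (2 ^ s'.+2) = -1 by rewrite nE zeta_half.
have z0 := z_neq0 hz.
have zn : zeta n ^+ n = 1.
  by rewrite [in X in _ ^+ X]nE -mul2n mulnC exprM hz sqrrN expr1n.
have evpn : forall x, ev pn x = x + 2 by move=> x; rewrite /pn evD evX evC.
have hnorm : normO n pn = 2.
  rewrite normO_Pz.
  have nE2 : n = (2 ^ s'.+1).*2.*2 by rewrite /n es !expnS !mul2n.
  rewrite {2}nE2 (@Pz_pair _ _ _ (fun x => 2 - x)); first last.
  - by move=> x; rewrite !evpn; ring.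
  - by rewrite -mul2n -expnS.
  - by rewrite -(expn0 2) ltn_exp2l.
  have -> : ((2 ^ s'.+1).*2 = 2 ^ s'.+2)%N by rewrite -mul2n -expnS.
  by apply: Pz_2pow; rewrite -exprM -expnS.
have n2 : (2 < n)%N by rewrite nE -mul2n -expnS -(expn1 2) ltn_exp2l.
split => //.
- move=> k hk.
  have hk0 : evk n k pn != 0.
    apply/negP => /eqP e; move: hnorm; rewrite /normO (bigD1 k) //= e mul0r => /eqP.
    by rewrite eq_sym pnatr_eq0.
  move: hk0; rewrite /evk -/(ev pn _) evpn /cc.
  set v := zeta n ^+ k.
  have vv : v * v^* = 1.
    apply: (@unit_norm _ n); first by rewrite expn_gt0.
    by rewrite /v -exprM mulnC exprM zn expr1n.
  have v0 : v != 0 by rewrite expf_neq0.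
  have vi : v^-1 = v^* by apply: (mulfI v0); rewrite mulfV // vv.
  have -> : v + v^-1 + 2 = (1 + v) * (1 + v)^*.
    by rewrite vi rmorphD rmorph1 mulrDr !mulrDl vv; ring.
  by rewrite mul_conjC_eq0 => h; rewrite mul_conjC_gt0.
have ep : evk n 1 pn = cc n 1 + (2:int)%:~R by rewrite /evk -/(ev pn _) evpn.
rewrite ep.
have cA : cc n 1 \in Aint by rewrite nE; apply: cc_Aint.
have OY := O_rest pn n2 z0.
have hY := norm_split pn n2; rewrite hnorm ep in hY.
set N := (2 ^ s'.+2)%N.
have h1 := R2_pow_add n 2 s'.+2.
have h2 := R2_addr ((2:int)%:~R ^+ N) (R2_cpow z0 s'.+2).
have ccN : cc n N = -2.
  rewrite /cc hz invrN invr1; rewrite -opprD; congr (- _).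
have N0 : (0 < N)%N by rewrite expn_gt0.
have h3 : R2 n (cc n N + (2:int)%:~R ^+ N) 0.
  exists ((2:int)%:~R ^+ N.-1 - 1); first by apply: O_sub; [apply: O_X; apply: O_int | exact: O_1].
  by rewrite ccN -{1}(prednK N0) exprS subr0; ring.
have [t Ot et] := R2_trans (R2_trans h1 h2) h3.
rewrite subr0 in et.
exact: (gen_prime cA OY hY Ot et).
Qed.
Lemma ev_aut (f : {rmorphism algC -> algC}) q x : f (ev q x) = ev q (f x).
Proof.
rewrite /ev -horner_map /=; congr (_.[_]).
rewrite -map_poly_comp; apply: eq_map_poly => i /=; exact: rmorph_int.
Qed.

Lemma aut_exists n k : coprime k n -> zeta n ^+ n = 1 ->
  exists f : {rmorphism algC -> algC}, forall q, f (evk n 1 q) = evk n k q.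
Proof.
move=> ck zn; have [f hf] := Qn_aut_exists ck.
exists f => q; rewrite /evk -!/(ev q _) ev_aut; congr ev.
by rewrite /cc rmorphD fmorphV /= !expr1 hf.
Qed.

Lemma sq3_ne (a b : int) : (a ^+ 2 - 3 * b ^+ 2 != 2) && (a ^+ 2 - 3 * b ^+ 2 != -1).
Proof.
have e := divz_eq a 3.
have h0 : (0 <= (a %% 3)%Z)%R by apply: modz_ge0.
have h1 : ((a %% 3)%Z < 3)%R by apply: ltz_pmod.
set r := (a %% 3)%Z in e h0 h1; set k := (a %/ 3)%Z in e.
rewrite e.
have : r = 0 \/ r = 1 \/ r = 2 by lia.
case=> [->|[->|->]]; rewrite !expr2; apply/andP; split; apply/eqP; nia.
Qed.

Lemma int_unit (a b : int) : a * b = 1 -> a = 1 \/ a = -1.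
Proof.
rewrite mulrC => /intUnitRing.unitzPl; rewrite qualifE => /orP[] /eqP; tauto.
Qed.

Lemma part_b s : (2 <= s)%N ->
     let n := (3 * 2 ^ s)%N in
     let pn' : {poly int} := 'X + 1 in
     [/\ normO n pn' = -2,
         normO n (pn' - 2%:P) = -2,
         generates_prime_above_2 n (evk n 1 pn'),
         (forall q : {poly int}, unitO n q -> normO n q = 1) &
         (forall q : {poly int}, normO n q <> 2)].
Proof.
move=> hs n pn'.
have [s' es] : exists s', s = s'.+2 by exists (s - 2)%N; lia.
set m := (3 * 2 ^ s'.+1)%N.
have nE : n = m.*2 by rewrite /n /m es expnS mulnCA mul2n.
have m0 : (0 < m)%N by rewrite /m muln_gt0 expn_gt0.
have hz : zeta n ^+ m = -1 by rewrite nE zeta_half.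
have z0 := z_neq0 hz.
have zn : zeta n ^+ n = 1.
  by rewrite [in X in _ ^+ X]nE -mul2n mulnC exprM hz sqrrN expr1n.
have hz2 : zeta n ^+ (2 ^ s'.+1) != -1.
  have -> : zeta n = (3 * 2 ^ s'.+1)%N.-root (-1) by rewrite /zeta nE doubleK.
  by apply: cube_root_lemma; rewrite expn_gt0.
have hpair : forall F, (forall x, F x * F (- x) = -1 - (x ^+ 2 - 2)) -> Pz (zeta n) n F = -2.
  move=> F hF.
  have nE2 : n = (3 * 2 ^ s').*2.*2 by rewrite /n es !expnS !mul2n; lia.
  rewrite {2}nE2 (@Pz_pair _ _ _ (fun x => -1 - x)); first last.
  - exact: hF.
  - have -> : ((3 * 2 ^ s').*2 = m)%N by rewrite /m expnS; lia.
    exact: hz.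
  - have := expn_gt0 2 s'; lia.
  have -> : ((3 * 2 ^ s').*2 = 3 * 2 ^ s'.+1)%N by rewrite expnS; lia.
  apply: Pz_3pow; rewrite -exprM.
    by have -> : (2 * (3 * 2 ^ s') = m)%N by rewrite /m expnS; lia.
  by rewrite -expnS.
have evpn : forall x, ev pn' x = x + 1 by move=> x; rewrite /pn' evD evX ev1.
have hnorm : normO n pn' = -2.
  by rewrite normO_Pz; apply: hpair => x; rewrite !evpn; ring.
have n2 : (2 < n)%N by rewrite /n es; have := expn_gt0 2 s'; rewrite !expnS; lia.
split => //.
- rewrite normO_Pz; apply: hpair => x.
  have e : forall y, ev (pn' - 2%:P) y = y - 1.
    by move=> y; rewrite evB evpn evC; rewrite -[(2:int)%:~R]/(2%:R : algC); ring.
  by rewrite !e; ring.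
- have ep : evk n 1 pn' = cc n 1 + (1:int)%:~R by rewrite /evk -/(ev pn' _) evpn.
  rewrite ep.
  have cA : cc n 1 \in Aint by rewrite nE; apply: cc_Aint.
  have OY := O_rest pn' n2 z0.
  have hY := norm_split pn' n2; rewrite hnorm ep in hY.
  have OY' : inO n (- \prod_(k < n | emb_idx n k && (k != Ordinal (ltnW n2))) evk n k pn').
    by rewrite -mulN1r; apply: O_mul => //; exact: (O_int n (-1)).
  have hY' : 2 = (cc n 1 + (1:int)%:~R) * (- \prod_(k < n | emb_idx n k && (k != Ordinal (ltnW n2))) evk n k pn').
    by rewrite mulrN -hY opprK.
  set N := (2 ^ s'.+2)%N.
  have h1 := R2_pow_add n 1 s'.+2.
  have h2 := R2_addr ((1:int)%:~R ^+ N) (R2_cpow z0 s'.+2).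
  have ccN : cc n N = -1.
    set u := zeta n ^+ (2 ^ s'.+1).
    have u3 : u ^+ 3 = -1 by rewrite /u -exprM mulnC hz.
    have u0 : u != 0 by rewrite expf_neq0.
    have uq : u ^+ 2 - u + 1 = 0.
      have h : (u + 1) * (u ^+ 2 - u + 1) = 0 by rewrite -[0](subrr (-1)) -{1}u3; ring.
      have z1 : u + 1 != 0 by rewrite addr_eq0.
      by move: h => /eqP; rewrite mulf_eq0 (negbTE z1) /= => /eqP.
    rewrite /cc; have -> : zeta n ^+ N = u ^+ 2 by rewrite /u -exprM mulnC -expnS.
    apply: (mulfI (expf_neq0 2 u0)).
    rewrite mulrDr mulfV ?expf_neq0 //.
    apply/eqP; rewrite -subr_eq0; apply/eqP.
    transitivity ((u ^+ 2 - u + 1) * (u ^+ 2 + u + 1)); first by ring.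
    by rewrite uq mul0r.
  have h3 : R2 n (cc n N + (1:int)%:~R ^+ N) 0.
    by rewrite ccN expr1n addNr; exact: R2_refl.
  have [t Ot et] := R2_trans (R2_trans h1 h2) h3.
  rewrite subr0 in et.
  exact: (gen_prime cA OY' hY' Ot et).
- have nE3 : n = (3 * 2 ^ s'.+2)%N by rewrite /n es.
  have nf : forall q, exists A : int, normO n q = A%:~R /\ (A != 2) && (A != -1).
    move=> q; have [a [b e]] : exists a b : int, Pz (zeta n) n (ev q) = (a ^+ 2 - 3 * b ^+ 2)%:~R.
      rewrite [X in Pz _ X]nE3; apply: norm3 => //; by rewrite -/m.
    by exists (a ^+ 2 - 3 * b ^+ 2); rewrite normO_Pz e sq3_ne.
  move=> q [q' hq].
  have [A [eA hA]] := nf q; have [B [eB _]] := nf q'.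
  have prod1 : normO n q * normO n q' = 1.
    rewrite /normO -big_split /=; apply: big1 => k hk.
    have [f hf] := aut_exists (proj1 (andP hk)) zn.
    by rewrite -!hf -rmorphM hq rmorph1.
  rewrite eA eB -intrM in prod1.
  have : A * B = 1 by apply/eqP; rewrite -(eqr_int algC) prod1.
  move/int_unit => [eA1|eA1]; first by rewrite eA eA1.
  by move: hA; rewrite eA1 eqxx andbF.
- have nE3 : n = (3 * 2 ^ s'.+2)%N by rewrite /n es.
  move=> q; have [a [b e]] : exists a b : int, Pz (zeta n) n (ev q) = (a ^+ 2 - 3 * b ^+ 2)%:~R.
    rewrite [X in Pz _ X]nE3; apply: norm3 => //; by rewrite -/m.
  rewrite normO_Pz e => h.
  have : a ^+ 2 - 3 * b ^+ 2 = 2.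
    by apply/eqP; rewrite -(eqr_int algC) h.
  by move/eqP; have := sq3_ne a b; case/andP => /negbTE ->.
Qed.

Theorem proposition3p12 :
  (forall s : nat, (3 <= s)%N ->
     let n := (2 ^ s)%N in
     let pn : {poly int} := 'X + 2%:P in
     [/\ normO n pn = 2,
         totally_positive n pn &
         generates_prime_above_2 n (evk n 1 pn)])
  /\
  (forall s : nat, (2 <= s)%N ->
     let n := (3 * 2 ^ s)%N in
     let pn' : {poly int} := 'X + 1 in
     [/\ normO n pn' = -2,
         normO n (pn' - 2%:P) = -2,
         generates_prime_above_2 n (evk n 1 pn'),
         (forall q : {poly int}, unitO n q -> normO n q = 1) &
         (forall q : {poly int}, normO n q <> 2)]).
Proof.
split; [exact: part_a | exact: part_b].
Qed.
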